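(* Let $r:\mathcal C_1\to\mathcal C_2$ be an $F$-linear exact functor between $F$-linear triangulated categories equipped with weight structures. Assume that (1) $r$ is weight exact and (2) $r_{w=0}:\mathcal C_{1,w=0}\to\mathcal C_{2,w=0}$ is full. Then $r$ maps minimal weight filtrations to minimal weight filtrations: if $M_{\le n-1}\to M\to M_{\ge n}\xrightarrow{\delta}M_{\le n-1}[1]$ is a minimal weight filtration concentrated at $n$ of $M\in\mathcal C_1$, then $r(M_{\le n-1})\to r(M)\to r(M_{\ge n})\xrightarrow{r(\delta)} r(M_{\le n-1})[1]$ is a minimal weight filtration concentrated at $n$ of $r(M)$.
   Context: $F$ denotes a finite direct product of fields of characteristic zero. A weight structure $w$ on a triangulated category $\mathcal C$ is a pair of full subcategories $(\mathcal C_{w\le0},\mathcal C_{w\ge0})$, closed under direct summands, with $\mathcal C_{w\le0}\subset\mathcal C_{w\le0}[1]$, $\mathcal C_{w\ge0}[1]\subset\mathcal C_{w\ge0}$, $\mathcal C_{w\le n}=\mathcal C_{w\le0}[n]$, $\mathcal C_{w\ge n}=\mathcal C_{w\ge0}[n]$, $\operatorname{Hom}(\mathcal C_{w\le0},\mathcal C_{w\ge1})=0$, and every object $M$ fits, for each $n$, into an exact triangle $A\to M\to B\to A[1]$ with $A\in\mathcal C_{w\le n}$, $B\in\mathcal C_{w\ge n+1}$ (a weight filtration). Heart: $\mathcal C_{w=0}=\mathcal C_{w\le0}\cap\mathcal C_{w\ge0}$. A functor $r$ is weight exact if it maps $\mathcal C_{1,w\le0}$ into $\mathcal C_{2,w\le0}$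 and $\mathcal C_{1,w\ge0}$ into $\mathcal C_{2,w\ge0}$; $r_{w=0}$ is the induced functor on hearts. For an additive category $\mathcal A$, the radical is the ideal $\operatorname{rad}_{\mathcal A}(X,Y)=\{f:X\to Y \mid \mathrm{id}_X-gf \text{ is invertible for all } g:Y\to X\}$. A minimal weight filtration concentrated at $n$ of $M$ is an exact triangle $M_{\le n-1}\to M\to M_{\ge n}\xrightarrow{\delta}M_{\le n-1}[1]$ with $M_{\le n-1}\in\mathcal C_{w\le n-1}$, $M_{\ge n}\in\mathcal C_{w\ge n}$ and $\delta\in\operatorname{rad}_{\mathcal C}(M_{\ge n},M_{\le n-1}[1])$. *)

(* Defs.v *)
From HB Require Import structures.
From mathcomp Require Import all_boot all_algebra.
Set Implicit Arguments.
Unset Strict Implicit.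
Unset Printing Implicit Defensive.
Import GRing.Theory.
Local Open Scope ring_scope.

(* F is (isomorphic to) a finite direct product  prod_{i<k} K_i  of fields
   of characteristic zero: the ring morphisms F -> K_i jointly give a
   bijection F -> prod_i K_i. *)
Definition finite_prod_char0_fields (F : comPzRingType) : Prop :=
  exists (k : nat) (K : 'I_k -> fieldType)
         (pr : forall i : 'I_k, {rmorphism F -> K i}),
    (forall i, [pchar (K i)] =i pred0) /\
    (forall x y : F, (forall i, pr i x = pr i y) -> x = y) /\
    (forall v : forall i : 'I_k, K i, exists x : F, forall i, pr i x = v i).

Record LinCat (F : comPzRingType) := MkLinCat {
  ob :> Type;
  hom : ob -> ob -> lmodType F;
  comp : forall X Y Z : ob, hom Y Z -> hom X Y -> hom X Z;
  idm : forall X : ob, hom X X;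
  compA : forall (X Y Z W : ob) (h : hom Z W) (g : hom Y Z) (f : hom X Y),
      comp h (comp g f) = comp (comp h g) f;
  comp1m : forall (X Y : ob) (f : hom X Y), comp (idm Y) f = f;
  compm1 : forall (X Y : ob) (f : hom X Y), comp f (idm X) = f;
  comp_linl : forall (X Y Z : ob) (a : F) (g1 g2 : hom Y Z) (f : hom X Y),
      comp (a *: g1 + g2) f = a *: comp g1 f + comp g2 f;
  comp_linr : forall (X Y Z : ob) (a : F) (g : hom Y Z) (f1 f2 : hom X Y),
      comp g (a *: f1 + f2) = a *: comp g f1 + comp g f2
}.
Arguments comp {F C X Y Z} : rename.
Arguments idm {F C} X : rename.
Arguments hom {F} C _ _ : rename.

Section CatDefs.
Variables (F : comPzRingType) (C : LinCat F).

Definition is_iso (X Y : C) (f : hom C X Y) : Prop :=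
  exists g : hom C Y X, comp g f = idm X /\ comp f g = idm Y.

Definition isomorphic (X Y : C) : Prop := exists f : hom C X Y, is_iso f.

Definition is_zero_obj (Z : C) : Prop := idm Z = 0.

Definition is_biprod (X Y S : C) : Prop :=
  exists (i1 : hom C X S) (i2 : hom C Y S) (p1 : hom C S X) (p2 : hom C S Y),
    [/\ comp p1 i1 = idm X, comp p2 i2 = idm Y, comp p1 i2 = 0,
        comp p2 i1 = 0 & comp i1 p1 + comp i2 p2 = idm S].

Definition additive_cat : Prop :=
  (exists Z : C, is_zero_obj Z) /\ (forall X Y : C, exists S : C, is_biprod X Y S).

Definition retract (X Y : C) : Prop :=
  exists (i : hom C X Y) (p : hom C Y X), comp p i = idm X.

Definition rad (X Y : C) (f : hom C X Y) : Prop :=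
  forall g : hom C Y X, is_iso (idm X - comp g f).

End CatDefs.

Record TriCat (F : comPzRingType) := MkTriCat {
  cat :> LinCat F;
  tc_additive : additive_cat cat;
  sh : cat -> cat;
  shm : forall X Y : cat, hom cat X Y -> hom cat (sh X) (sh Y);
  shm_lin : forall (X Y : cat) (a : F) (f g : hom cat X Y),
      shm (a *: f + g) = a *: shm f + shm g;
  shm_comp : forall (X Y Z : cat) (g : hom cat Y Z) (f : hom cat X Y),
      shm (comp g f) = comp (shm g) (shm f);
  shm_id : forall X : cat, shm (idm X) = idm (sh X);
  shm_faithful : forall (X Y : cat) (f g : hom cat X Y), shm f = shm g -> f = g;
  shm_full : forall (X Y : cat) (g : hom cat (sh X) (sh Y)), exists f, shm f = g;
  sh_esurj : forall X : cat, exists Y : cat, isomorphic (sh Y) X;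
  dist : forall X Y Z : cat,
      hom cat X Y -> hom cat Y Z -> hom cat Z (sh X) -> Prop;
  tr1_iso : forall (X Y Z X' Y' Z' : cat)
      (f : hom cat X Y) (g : hom cat Y Z) (h : hom cat Z (sh X))
      (f' : hom cat X' Y') (g' : hom cat Y' Z') (h' : hom cat Z' (sh X'))
      (a : hom cat X X') (b : hom cat Y Y') (c : hom cat Z Z'),
      is_iso a -> is_iso b -> is_iso c ->
      comp b f = comp f' a -> comp c g = comp g' b ->
      comp (shm a) h = comp h' c ->
      dist f g h -> dist f' g' h';
  tr1_id : forall (X Z : cat), is_zero_obj Z ->
      dist (idm X) (0 : hom cat X Z) (0 : hom cat Z (sh X));
  tr1_ext : forall (X Y : cat) (f : hom cat X Y),
      exists (Z : cat) (g : hom cat Y Z) (h : hom cat Z (sh X)), dist f g h;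
  tr2 : forall (X Y Z : cat)
      (f : hom cat X Y) (g : hom cat Y Z) (h : hom cat Z (sh X)),
      dist f g h <-> dist g h (- shm f);
  tr3 : forall (X Y Z X' Y' Z' : cat)
      (f : hom cat X Y) (g : hom cat Y Z) (h : hom cat Z (sh X))
      (f' : hom cat X' Y') (g' : hom cat Y' Z') (h' : hom cat Z' (sh X'))
      (a : hom cat X X') (b : hom cat Y Y'),
      dist f g h -> dist f' g' h' -> comp b f = comp f' a ->
      exists c : hom cat Z Z', comp c g = comp g' b /\ comp (shm a) h = comp h' c;
  tr4 : forall (X Y Z Z' X' Y' : cat) (f : hom cat X Y) (g : hom cat Y Z)
      (u : hom cat Y Z') (h : hom cat Z' (sh X))
      (v : hom cat Z X') (k : hom cat X' (sh Y))
      (w : hom cat Z Y') (l : hom cat Y' (sh X)),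
      dist f u h -> dist g v k -> dist (comp g f) w l ->
      exists (a : hom cat Z' Y') (b : hom cat Y' X'),
        [/\ dist a b (comp (shm u) k), comp a u = comp w g, comp l a = h,
            comp b w = v & comp k b = comp (shm f) l]
}.
Arguments sh {F} t _ : rename.
Arguments shm {F t X Y} : rename.
Arguments dist {F t X Y Z} : rename.

Section WeightDefs.
Variables (F : comPzRingType) (C : TriCat F).

Definition shn (n : nat) (X : C) : C := iter n (sh C) X.

(* membership in the shifted class  P[n], n : int :
   X is isomorphic to Y[n] for some Y in P; with n = a - b this is
   expressed as X[b] ~= Y[a] (the shift being an auto-equivalence). *)
Definition shifted (P : C -> Prop) (n : int) (X : C) : Prop :=
  exists (Y : C) (a b : nat),
    [/\ P Y, n = (a%:Z - b%:Z)%R & isomorphic (shn b X) (shn a Y)].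

Record WeightStr := MkWeightStr {
  wle0 : C -> Prop;
  wge0 : C -> Prop;
  wle0_summand : forall X Y : C, retract X Y -> wle0 Y -> wle0 X;
  wge0_summand : forall X Y : C, retract X Y -> wge0 Y -> wge0 X;
  wle0_sub_shift : forall X : C, wle0 X -> shifted wle0 1 X;
  wge0_shift_sub : forall X : C, shifted wge0 1 X -> wge0 X;
  w_orth : forall X Y : C, wle0 X -> shifted wge0 1 Y ->
      forall f : hom C X Y, f = 0;
  w_filt : forall (M : C) (n : int),
      exists (A B : C) (f : hom C A M) (g : hom C M B) (h : hom C B (sh C A)),
        [/\ dist f g h, shifted wle0 n A & shifted wge0 (n + 1) B]
}.

Definition wle (w : WeightStr) (n : int) : C -> Prop := shifted (wle0 w) n.
Definition wge (w : WeightStr) (n : int) : C -> Prop := shifted (wge0 w) n.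

Definition heart (w : WeightStr) (X : C) : Prop := wle0 w X /\ wge0 w X.

Definition min_wfilt (w : WeightStr) (n : int) (M A B : C)
    (f : hom C A M) (g : hom C M B) (d : hom C B (sh C A)) : Prop :=
  [/\ dist f g d, wle w (n - 1) A, wge w n B & rad d].

End WeightDefs.

Record ExactFun (F : comPzRingType) (C1 C2 : TriCat F) := MkExactFun {
  fob :> C1 -> C2;
  fhom : forall X Y : C1, hom C1 X Y -> hom C2 (fob X) (fob Y);
  fhom_lin : forall (X Y : C1) (a : F) (f g : hom C1 X Y),
      fhom (a *: f + g) = a *: fhom f + fhom g;
  fhom_comp : forall (X Y Z : C1) (g : hom C1 Y Z) (f : hom C1 X Y),
      fhom (comp g f) = comp (fhom g) (fhom f);
  fhom_id : forall X : C1, fhom (idm X) = idm (fob X);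
  fphi : forall X : C1, hom C2 (fob (sh C1 X)) (sh C2 (fob X));
  fphi_iso : forall X : C1, is_iso (fphi X);
  fphi_nat : forall (X Y : C1) (f : hom C1 X Y),
      comp (fphi Y) (fhom (shm f)) = comp (shm (fhom f)) (fphi X);
  fdist : forall (X Y Z : C1)
      (f : hom C1 X Y) (g : hom C1 Y Z) (h : hom C1 Z (sh C1 X)),
      dist f g h -> dist (fhom f) (fhom g) (comp (fphi X) (fhom h))
}.
Arguments fhom {F C1 C2} r {X Y} : rename.
Arguments fphi {F C1 C2} r X : rename.

Definition weight_exact (F : comPzRingType) (C1 C2 : TriCat F)
    (w1 : WeightStr C1) (w2 : WeightStr C2) (r : ExactFun C1 C2) : Prop :=
  (forall X : C1, wle0 w1 X -> wle0 w2 (r X)) /\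
  (forall X : C1, wge0 w1 X -> wge0 w2 (r X)).

Definition full_on_hearts (F : comPzRingType) (C1 C2 : TriCat F)
    (w1 : WeightStr C1) (r : ExactFun C1 C2) : Prop :=
  forall X Y : C1, heart w1 X -> heart w1 Y ->
    forall g : hom C2 (r X) (r Y), exists f : hom C1 X Y, fhom r f = g.

(* Main.v *)
Require Import Defs.
From HB Require Import structures.
From mathcomp Require Import all_boot all_algebra.
From mathcomp Require Import zify.
Import Defs.
Import GRing.Theory.
Set Implicit Arguments.
Unset Strict Implicit.
Unset Printing Implicit Defensive.
Local Open Scope ring_scope.

Section Lin.
Variables (F : comPzRingType) (C : LinCat F).

Lemma compDl (X Y Z : C) (g1 g2 : hom C Y Z) (f : hom C X Y) :
  comp (g1 + g2) f = comp g1 f + comp g2 f.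
Proof. have H := comp_linl 1 g1 g2 f. rewrite !scale1r in H. exact H. Qed.
Lemma compDr (X Y Z : C) (g : hom C Y Z) (f1 f2 : hom C X Y) :
  comp g (f1 + f2) = comp g f1 + comp g f2.
Proof. have H := comp_linr 1 g f1 f2. rewrite !scale1r in H. exact H. Qed.
Lemma comp0m (X Y Z : C) (f : hom C X Y) : comp (0 : hom C Y Z) f = 0.
Proof. have h := compDl (0 : hom C Y Z) 0 f; rewrite addr0 in h. by apply: (addrI (comp 0 f)); rewrite -h addr0. Qed.
Lemma compm0 (X Y Z : C) (g : hom C Y Z) : comp g (0 : hom C X Y) = 0.
Proof. have h := compDr g (0 : hom C X Y) 0; rewrite addr0 in h. by apply: (addrI (comp g 0)); rewrite -h addr0. Qed.
Lemma compNl (X Y Z : C) (g : hom C Y Z) (f : hom C X Y) : comp (- g) f = - comp g f.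
Proof. by apply/eqP; rewrite -subr_eq0 opprK -compDl addNr comp0m. Qed.
Lemma compNr (X Y Z : C) (g : hom C Y Z) (f : hom C X Y) : comp g (- f) = - comp g f.
Proof. by apply/eqP; rewrite -subr_eq0 opprK -compDr addNr compm0. Qed.
Lemma compBl (X Y Z : C) (g1 g2 : hom C Y Z) (f : hom C X Y) :
  comp (g1 - g2) f = comp g1 f - comp g2 f.
Proof. by rewrite compDl compNl. Qed.

Lemma iso_id (X : C) : is_iso (idm X).
Proof. by exists (idm X); rewrite comp1m. Qed.
Lemma iso_comp (X Y Z : C) (g : hom C Y Z) (f : hom C X Y) :
  is_iso f -> is_iso g -> is_iso (comp g f).
Proof.
move=> [f' [h1 h2]] [g' [h3 h4]]; exists (comp f' g'); split.
  by rewrite compA -(compA f') h3 compm1.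
by rewrite compA -(compA g) h2 compm1.
Qed.
Lemma iso_inv (X Y : C) (f : hom C X Y) (g : hom C Y X) :
  comp g f = idm X -> comp f g = idm Y -> is_iso g.
Proof. by move=> h1 h2; exists f. Qed.
Lemma iso_cancel_l (X Y Z : C) (f : hom C Y Z) (g1 g2 : hom C X Y) :
  is_iso f -> comp f g1 = comp f g2 -> g1 = g2.
Proof.
move=> [f' [h1 _]] e; by rewrite -(comp1m g1) -(comp1m g2) -h1 -!compA e.
Qed.
Lemma iso_cancel_r (X Y Z : C) (f : hom C X Y) (g1 g2 : hom C Y Z) :
  is_iso f -> comp g1 f = comp g2 f -> g1 = g2.
Proof.
move=> [f' [_ h2]] e; by rewrite -(compm1 g1) -(compm1 g2) -h2 !compA e.
Qed.
Lemma isoc_refl (X : C) : isomorphic X X.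
Proof. exists (idm X); exact: iso_id. Qed.
Lemma isoc_sym (X Y : C) : isomorphic X Y -> isomorphic Y X.
Proof. by move=> [f [g [h1 h2]]]; exists g; exists f. Qed.
Lemma isoc_trans (X Y Z : C) : isomorphic X Y -> isomorphic Y Z -> isomorphic X Z.
Proof. move=> [f hf] [g hg]; exists (comp g f); exact: iso_comp. Qed.
Lemma iso_retract (X Y : C) : isomorphic X Y -> retract X Y.
Proof. by move=> [f [g [h1 h2]]]; exists f, g. Qed.
Lemma retract_trans (X Y Z : C) : retract X Y -> retract Y Z -> retract X Z.
Proof.
move=> [i [p h]] [i' [p' h']]; exists (comp i' i), (comp p p').
by rewrite compA -(compA p) h' compm1.
Qed.
End Lin.
Section Tri.
Variables (F : comPzRingType) (C : TriCat F).

Lemma shmD (X Y : C) (f g : hom C X Y) : shm (f + g) = shm f + shm g.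
Proof. have H := shm_lin 1 f g. rewrite !scale1r in H. exact H. Qed.
Lemma shm0 (X Y : C) : shm (0 : hom C X Y) = 0.
Proof. have h := shmD (0 : hom C X Y) 0; rewrite addr0 in h. by apply: (addrI (shm (0 : hom C X Y))); rewrite -h addr0. Qed.
Lemma shmN (X Y : C) (f : hom C X Y) : shm (- f) = - shm f.
Proof. by apply/eqP; rewrite -subr_eq0 opprK -shmD addNr shm0. Qed.
Lemma shm_iso (X Y : C) (f : hom C X Y) : is_iso f -> is_iso (shm f).
Proof. move=> [g [h1 h2]]; exists (shm g); by rewrite -!shm_comp h1 h2 !shm_id. Qed.
Lemma sh_isoc (X Y : C) : isomorphic X Y -> isomorphic (sh C X) (sh C Y).
Proof. by move=> [f hf]; exists (shm f); apply: shm_iso. Qed.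
Lemma sh_reflect_isoc (X Y : C) : isomorphic (sh C X) (sh C Y) -> isomorphic X Y.
Proof.
move=> [f [g [h1 h2]]].
have [f0 ef] := shm_full f; have [g0 eg] := shm_full g.
exists f0; exists g0; split; apply: shm_faithful;
by rewrite shm_comp ef eg ?h1 ?h2 shm_id.
Qed.
Lemma sh_retract (X Y : C) : retract X Y -> retract (sh C X) (sh C Y).
Proof. move=> [i [p h]]; exists (shm i), (shm p); by rewrite -shm_comp h shm_id. Qed.
Lemma sh_reflect_retract (X Y : C) : retract (sh C X) (sh C Y) -> retract X Y.
Proof.
move=> [i [p h]].
have [i0 ei] := shm_full i; have [p0 ep] := shm_full p.
exists i0, p0; apply: shm_faithful; by rewrite shm_comp ei ep h shm_id.
Qed.

Fixpoint shnm (k : nat) (X Y : C) (f : hom C X Y) {struct k} :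
  hom C (shn k X) (shn k Y) :=
  match k return hom C (shn k X) (shn k Y) with
  | 0 => f
  | k'.+1 => shm (shnm k' f)
  end.

Lemma shnm_comp k (X Y Z : C) (g : hom C Y Z) (f : hom C X Y) :
  shnm k (comp g f) = comp (shnm k g) (shnm k f).
Proof. elim: k => [//|k IH] /=; by rewrite IH shm_comp. Qed.
Lemma shnm_id k (X : C) : shnm k (idm X) = idm (shn k X).
Proof. elim: k => [//|k IH] /=; by rewrite IH shm_id. Qed.
Lemma shnm0 k (X Y : C) : shnm k (0 : hom C X Y) = 0.
Proof. elim: k => [//|k IH] /=; by rewrite IH shm0. Qed.
Lemma shnm_faithful k (X Y : C) (f g : hom C X Y) : shnm k f = shnm k g -> f = g.
Proof. elim: k => [//|k IH] /= e; apply: IH; exact: shm_faithful. Qed.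
Lemma shnm_full k (X Y : C) (g : hom C (shn k X) (shn k Y)) :
  exists f, shnm k f = g.
Proof.
elim: k g => [|k IH] g /=; first by exists g.
have [g1 e1] := shm_full g; have [f ef] := IH g1; exists f; by rewrite ef.
Qed.
Lemma shn_isoc k (X Y : C) : isomorphic X Y -> isomorphic (shn k X) (shn k Y).
Proof. elim: k => [//|k IH] h /=; apply: sh_isoc; exact: IH. Qed.
Lemma shn_reflect_isoc k (X Y : C) :
  isomorphic (shn k X) (shn k Y) -> isomorphic X Y.
Proof. elim: k => [//|k IH] h /=; apply: IH; exact: sh_reflect_isoc. Qed.
Lemma shn_retract k (X Y : C) : retract X Y -> retract (shn k X) (shn k Y).
Proof. elim: k => [//|k IH] h /=; apply: sh_retract; exact: IH. Qed.
Lemma shn_reflect_retract k (X Y : C) :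
  retract (shn k X) (shn k Y) -> retract X Y.
Proof. elim: k => [//|k IH] h /=; apply: IH; exact: sh_reflect_retract. Qed.
Lemma shn_esurj k (X : C) : exists Y : C, isomorphic (shn k Y) X.
Proof.
elim: k X => [|k IH] X /=; first by exists X; apply: isoc_refl.
have [Z hZ] := sh_esurj X; have [Y hY] := IH Z.
exists Y; apply: isoc_trans hZ; exact: sh_isoc.
Qed.
Lemma shn_add a b (X : C) : shn (a + b) X = shn a (shn b X).
Proof. exact: iterD. Qed.

Lemma zero_exists : exists Z0 : C, is_zero_obj Z0.
Proof. by have [[Z0 h] _] := tc_additive C; exists Z0. Qed.

Lemma tri_L1 (X Y Z W : C) (f : hom C X Y) (g : hom C Y Z) (h : hom C Z (sh C X))
  (u : hom C Y W) : dist f g h -> comp u f = 0 -> exists c : hom C Z W, comp c g = u.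
Proof.
move=> T uf.
have T1 := T; do 3! move/tr2: T1 => T1.
have [Z0 hZ0] := zero_exists.
have T2 := tr1_id W hZ0; do 2! move/tr2: T2 => T2.
have [c' [e1 _]] := tr3 T1 T2 (a := 0) (b := shm u)
  ltac:(by rewrite compNr -shm_comp uf shm0 oppr0 comp0m).
have [c ec] := shm_full c'.
exists c; apply: shm_faithful; rewrite shm_comp ec.
move: e1; rewrite compNr compNl shm_id comp1m => /eqP; rewrite eqr_opp => /eqP //.
Qed.

Lemma tri_L1' (X Y Z W : C) (f : hom C X Y) (g : hom C Y Z) (h : hom C Z (sh C X))
  (v : hom C W Y) : dist f g h -> comp g v = 0 -> exists c : hom C W X, comp f c = v.
Proof.
move=> T gv.
have T1 := T; move/tr2: T1 => T1.
have [Z0 hZ0] := zero_exists.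
have T2 := tr1_id W hZ0; move/tr2: T2 => T2.
have [c' [_ e2]] := tr3 T2 T1 (a := v) (b := 0)
  ltac:(by rewrite gv comp0m).
have [c ec] := shm_full c'.
exists c; apply: shm_faithful; rewrite shm_comp ec.
move: e2; rewrite compNr compNl shm_id compm1 => /eqP; rewrite eqr_opp => /eqP //.
Qed.
End Tri.
Section W.
Variables (F : comPzRingType) (C : TriCat F) (w : WeightStr C).

Lemma NL (a b a' b' : nat) (X Y : C) :
  isomorphic (shn b X) (shn a Y) -> (a + b' = a' + b)%N ->
  isomorphic (shn b' X) (shn a' Y).
Proof.
move=> h e; apply: (@shn_reflect_isoc _ _ b).
have := shn_isoc b' h; rewrite -!shn_add.
have -> : (b' + b = b + b')%N by lia.
by have -> : (b' + a = b + a')%N by lia.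
Qed.

Lemma int_eq (a b a' b' : nat) : (a%:Z - b%:Z = a'%:Z - b'%:Z)%R -> (a + b' = a' + b)%N.
Proof. move=> h; lia. Qed.

Lemma shifted_norm (P : C -> Prop) (n : int) (X : C) (a' b' : nat) :
  shifted P n X -> n = (a'%:Z - b'%:Z)%R ->
  exists Y, P Y /\ isomorphic (shn b' X) (shn a' Y).
Proof.
move=> [Y [a [b [hY en hX]]]] en'; exists Y; split => //.
apply: NL hX _; apply: int_eq; by rewrite -en -en'.
Qed.

Lemma shifted_retract (P : C -> Prop)
  (Pret : forall X Y : C, retract X Y -> P Y -> P X) (n : int) (X Z : C) :
  retract X Z -> shifted P n Z -> shifted P n X.
Proof.
move=> hr [Y [a [b [hY en hZ]]]].
have [X0 hX0] := shn_esurj a (shn b X).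
exists X0, a, b; split => //; last exact: isoc_sym.
apply: (Pret _ Y) => //; apply: (@shn_reflect_retract _ _ a).
apply: retract_trans (iso_retract hX0) _.
apply: retract_trans (shn_retract b hr) _; exact: iso_retract.
Qed.

Lemma shnSr k (X : C) : shn k (sh C X) = sh C (shn k X).
Proof. by rewrite /shn -iterSr. Qed.

Lemma shifted_sh (P : C -> Prop) (n : int) (X : C) :
  shifted P n X -> shifted P (n + 1) (sh C X).
Proof.
move=> [Y [a [b [hY en hX]]]]; exists Y, a.+1, b; split => //.
  rewrite en; lia.
rewrite shnSr; exact: sh_isoc.
Qed.

Lemma wge0_sh (X : C) : wge0 w X -> wge0 w (sh C X).
Proof.
move=> h; apply: wge0_shift_sub; exists X, 1%N, 0%N; split => //; exact: isoc_refl.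
Qed.
Lemma wge0_shn k (X : C) : wge0 w X -> wge0 w (shn k X).
Proof. elim: k => [//|k IH] h /=; apply: wge0_sh; exact: IH. Qed.

Lemma w_orth_gen (m k : int) (X Y : C) (f : hom C X Y) :
  wle w m X -> wge w k Y -> (m < k)%R -> f = 0.
Proof.
move=> [X0 [a1 [b1 [hX0 em hX]]]] [Y0 [a2 [b2 [hY0 ek hY]]]] mk.
have hX' : isomorphic (shn (b1 + b2) X) (shn (a1 + b2) X0).
  apply: NL hX _; lia.
have lt : (a1 + b2 < a2 + b1)%N by lia.
have e : (a2 + b1 = (a1 + b2) + (a2 + b1 - (a1 + b2)).-1.+1)%N by lia.
have hY' : isomorphic (shn (b1 + b2) Y) (shn ((a1 + b2) + (a2 + b1 - (a1 + b2)).-1.+1) Y0).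
  apply: NL hY _; lia.
rewrite (shn_add (a1 + b2)) in hY'.
move: hX' hY'.
set b := (b1 + b2)%N; set c := (a1 + b2)%N; set Y1 := shn (a2 + b1 - c).-1.+1 Y0.
move=> [al [al' [hal1 hal2]]] [be [be' [hbe1 hbe2]]].
have hY1 : shifted (wge0 w) 1 Y1.
  exists (shn (a2 + b1 - c).-1 Y0), 1%N, 0%N; split => //; last exact: isoc_refl.
  exact: wge0_shn.
have [f0 e0] := shnm_full (k := c) (comp be (comp (shnm b f) al')).
have z := w_orth hX0 hY1 f0.
have E : comp be (comp (shnm b f) al') = 0 by rewrite -e0 z shnm0.
have : comp be' (comp (comp be (comp (shnm b f) al')) al) = shnm b f.
  by rewrite !compA hbe1 comp1m -compA hal1 compm1.
rewrite E comp0m compm0 => /esym; rewrite -(shnm0 b X Y).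
exact: shnm_faithful.
Qed.
End W.
Section W2.
Variables (F : comPzRingType) (C : TriCat F) (w : WeightStr C).

Lemma heart_ge (n : int) (B1 B B2 : C) (i : hom C B1 B) (p : hom C B B2)
  (dl : hom C B2 (sh C B1)) :
  dist i p dl -> wge w n B -> wge w (n + 1) B2 -> wge w n B1.
Proof.
move=> T hB hB2.
have [P [Q [s [t [e [T' hP hQ]]]]]] := w_filt w B1 (n - 1).
rewrite subrK in hQ.
have is0 : comp i s = 0.
  apply: (w_orth_gen (w := w) (m := n - 1) (k := n)) => //; lia.
have s0 : s = 0.
  have T2 := T; do 2! move/tr2: T2 => T2.
  have [c ec] := tri_L1' T2 (v := shm s)
    ltac:(by rewrite compNl -shm_comp is0 shm0 oppr0).
  have c0 : c = 0.
    apply: (w_orth_gen (w := w) (m := n) (k := n + 1)) => //; last lia.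
    by have := shifted_sh hP; rewrite subrK.
  apply: shm_faithful; by rewrite -ec c0 compm0 shm0.
have [c ec] := tri_L1 T' (u := idm B1) ltac:(by rewrite s0 compm0).
apply: (shifted_retract (@wge0_summand _ _ w) (Z := Q)) => //.
by exists t, c.
Qed.

Lemma heart_le (n : int) (A1 A' A2 : C) (j : hom C A1 A') (q : hom C A' A2)
  (e : hom C A2 (sh C A1)) :
  dist j q e -> wle w n A' -> wle w (n - 1) A1 -> wle w n A2.
Proof.
move=> T hA' hA1.
have [P [Q [s [t [e' [T' hP hQ]]]]]] := w_filt w A2 n.
have tq : comp t q = 0.
  apply: (w_orth_gen (w := w) (m := n) (k := n + 1)) => //; lia.
have t0 : t = 0.
  have T1 := T; move/tr2: T1 => T1.
  have [c ec] := tri_L1 T1 tq.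
  have c0 : c = 0.
    apply: (w_orth_gen (w := w) (m := n) (k := n + 1)) => //; last lia.
    by have := shifted_sh hA1; rewrite subrK.
  by rewrite -ec c0 comp0m.
have [c ec] := tri_L1' T' (v := idm A2) ltac:(by rewrite t0 comp0m).
apply: (shifted_retract (@wle0_summand _ _ w) (Z := P)) => //.
by exists c, s.
Qed.

Lemma heart_n (n : int) (X : C) : wle w n X -> wge w n X ->
  exists (a b : nat) (X0 : C), heart w X0 /\ isomorphic (shn b X) (shn a X0)
    /\ n = (a%:Z - b%:Z)%R.
Proof.
move=> [X1 [a [b [h1 en h1i]]]] h2.
have [X2 [h2' h2i]] := shifted_norm h2 en.
exists a, b, X1; split => //; split => //.
apply: (wge0_summand (Y := X2)) => //; apply: iso_retract.
apply: (@shn_reflect_isoc _ _ a); apply: isoc_trans (isoc_sym h1i) h2i.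
Qed.
End W2.
Section Fun.
Variables (F : comPzRingType) (C1 C2 : TriCat F) (r : ExactFun C1 C2).

Lemma fhomD (X Y : C1) (f g : hom C1 X Y) : fhom r (f + g) = fhom r f + fhom r g.
Proof. have H := fhom_lin r 1 f g. rewrite !scale1r in H. exact H. Qed.
Lemma fhom0 (X Y : C1) : fhom r (0 : hom C1 X Y) = 0.
Proof. have h := fhomD (0 : hom C1 X Y) 0; rewrite addr0 in h. by apply: (addrI (fhom r (0 : hom C1 X Y))); rewrite -h addr0. Qed.
Lemma fhomN (X Y : C1) (f : hom C1 X Y) : fhom r (- f) = - fhom r f.
Proof. by apply/eqP; rewrite -subr_eq0 opprK -fhomD addNr fhom0. Qed.
Lemma fhomB (X Y : C1) (f g : hom C1 X Y) : fhom r (f - g) = fhom r f - fhom r g.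
Proof. by rewrite fhomD fhomN. Qed.
Lemma fhom_iso (X Y : C1) (f : hom C1 X Y) : is_iso f -> is_iso (fhom r f).
Proof. move=> [g [h1 h2]]; exists (fhom r g); by rewrite -!fhom_comp h1 h2 !fhom_id. Qed.
Lemma fisoc (X Y : C1) : isomorphic X Y -> isomorphic (r X) (r Y).
Proof. by move=> [f hf]; exists (fhom r f); apply: fhom_iso. Qed.
Lemma f_shn k (X : C1) : isomorphic (r (shn k X)) (shn k (r X)).
Proof.
elim: k => [|k IH] /=; first exact: isoc_refl.
apply: isoc_trans (sh_isoc IH); exists (fphi r _); exact: fphi_iso.
Qed.
Lemma f_shifted (P1 : C1 -> Prop) (P2 : C2 -> Prop) (n : int) (X : C1) :
  (forall X, P1 X -> P2 (r X)) -> shifted P1 n X -> shifted P2 n (r X).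
Proof.
move=> hP [Y [a [b [hY en hX]]]]; exists (r Y), a, b; split; first exact: hP.
  done.
apply: isoc_trans (isoc_sym (f_shn b X)) _.
apply: isoc_trans (fisoc hX) _; exact: f_shn.
Qed.

Definition Lift (X Y : C1) :=
  forall H : hom C2 (r X) (r Y), exists h : hom C1 X Y, fhom r h = H.

Lemma Lift_conj (X Y X' Y' : C1) :
  isomorphic X X' -> isomorphic Y Y' -> Lift X' Y' -> Lift X Y.
Proof.
move=> [al [al' [ha1 ha2]]] [be [be' [hb1 hb2]]] L H.
have [h' eh] := L (comp (fhom r be) (comp H (fhom r al'))).
exists (comp be' (comp h' al)).
rewrite !fhom_comp eh !compA -fhom_comp hb1 fhom_id comp1m -compA -fhom_comp ha1.
by rewrite fhom_id compm1.
Qed.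

Lemma Lift_sh (X Y : C1) : Lift X Y -> Lift (sh C1 X) (sh C1 Y).
Proof.
move=> L H.
have [ps [hp1 hp2]] := fphi_iso r X.
have [K eK] := shm_full (comp (fphi r Y) (comp H ps)).
have [k ek] := L K.
exists (shm k); apply: (iso_cancel_l (fphi_iso r Y)).
rewrite fphi_nat ek eK -!compA hp1 compm1 //.
Qed.

Lemma Lift_unsh (X Y : C1) : Lift (sh C1 X) (sh C1 Y) -> Lift X Y.
Proof.
move=> L H.
have [ps [hp1 hp2]] := fphi_iso r Y.
have [k' ek'] := L (comp ps (comp (shm H) (fphi r X))).
have [k ek] := shm_full k'.
exists k; apply: shm_faithful.
apply: (iso_cancel_r (fphi_iso r X)).
rewrite -fphi_nat ek ek' compA hp2 comp1m //.
Qed.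

Lemma Lift_shn k (X Y : C1) : Lift X Y -> Lift (shn k X) (shn k Y).
Proof. elim: k => [//|k IH] L /=; apply: Lift_sh; exact: IH. Qed.
Lemma Lift_unshn k (X Y : C1) : Lift (shn k X) (shn k Y) -> Lift X Y.
Proof. elim: k => [//|k IH] L /=; apply: IH; exact: Lift_unsh. Qed.

Lemma Lift_n (w1 : WeightStr C1) (hfull : full_on_hearts w1 r) (n : int) (X Y : C1) :
  wle w1 n X -> wge w1 n X -> wle w1 n Y -> wge w1 n Y -> Lift X Y.
Proof.
move=> hX1 hX2 hY1 hY2.
have [a [b [X0 [hX0 [iX en]]]]] := heart_n hX1 hX2.
have [a' [b' [Y0 [hY0 [iY en']]]]] := heart_n hY1 hY2.
have iY' : isomorphic (shn b Y) (shn a Y0).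
  apply: NL iY _; apply: int_eq; by rewrite -en -en'.
apply: (Lift_unshn (k := b)).
apply: (Lift_conj iX iY'); apply: Lift_shn.
move=> H; exact: hfull.
Qed.
End Fun.

Theorem mainTheorem2 (F : comPzRingType) (hF : finite_prod_char0_fields F)
    (C1 C2 : TriCat F) (w1 : WeightStr C1) (w2 : WeightStr C2)
    (r : ExactFun C1 C2)
    (hexact : weight_exact w1 w2 r) (hfull : full_on_hearts w1 r)
    (n : int) (M A B : C1)
    (f : hom C1 A M) (g : hom C1 M B) (d : hom C1 B (sh C1 A)) :
  min_wfilt w1 n f g d ->
  min_wfilt w2 n (fhom r f) (fhom r g) (comp (fphi r A) (fhom r d)).
Proof.
move=> [T hA hB hrad].
have [hle hge] := hexact.
have rle m (X : C1) : wle w1 m X -> wle w2 m (r X) by move=> h; exact: f_shifted hle h.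
have rge m (X : C1) : wge w1 m X -> wge w2 m (r X) by move=> h; exact: f_shifted hge h.
split; [exact: fdist | exact: rle | exact: rge |].
move=> G.
suff [g0 eg0] : exists g0 : hom C1 (sh C1 A) B, fhom r g0 = comp G (fphi r A).
  rewrite compA -eg0 -fhom_comp -fhom_id -fhomB; apply: fhom_iso; exact: hrad.
have hA' : wle w1 n (sh C1 A) by have := shifted_sh hA; rewrite subrK.
have [B1 [B2 [i [p [dl [TB hB1 hB2]]]]]] := w_filt w1 B n.
have hB1' : wge w1 n B1 := heart_ge TB hB hB2.
have [A1 [A2 [j [q [e [TA hA1 hA2]]]]]] := w_filt w1 (sh C1 A) (n - 1).
rewrite subrK in hA2.
have hA2' : wle w1 n A2 := heart_le TA hA' hA1.
set H := comp G (fphi r A).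
have rTB := fdist r TB; have rTA := fdist r TA.
have pH : comp (fhom r p) H = 0.
  apply: (w_orth_gen (w := w2) (m := n) (k := n + 1)); [exact: rle | exact: rge | lia].
have [H1 eH1] := tri_L1' rTB pH.
have H1j : comp H1 (fhom r j) = 0.
  apply: (w_orth_gen (w := w2) (m := n - 1) (k := n)); [exact: rle | exact: rge | lia].
have [H2 eH2] := tri_L1 rTA H1j.
have [h eh] := Lift_n hfull hA2' hA2 hB1 hB1' H2.
exists (comp i (comp h q)); by rewrite !fhom_comp eh eH2 eH1.
Qed.
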